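(* The homotopy $H:\mathcal{T}^c(M)\to\mathcal{T}^c(M)$ maps the sub-$\mathbb{S}$-module $\mathcal{G}^{¡}\subset\mathcal{T}^c(M)$ into itself.
   Context: $M$ is spanned by arity-2 elements $\mu$ (degree 1) and $\beta$ (degree 2), trivial $\mathbb{S}_2$-action. The Gerstenhaber operad is $\mathcal{G}=\mathcal{T}(s^{-1}M)/(R)$ with $s^{-1}\mu=\bullet$ (commutative associative product) and $s^{-1}\beta=\langle\,,\rangle$ (degree-1 Lie bracket), with Leibniz compatibility. Its Koszul dual cooperad $\mathcal{G}^{¡}$ is the intersection of $\mathcal{T}^c(M)\subset\mathcal{T}^c(s\overline{\mathcal{G}})$ with the kernel of the coderivation $d_2$ of the bar construction induced by infinitesimal composition in $\mathcal G$. $H$ is defined as follows: for a binary tree and vertex $v$, $\omega(v)=m_vn_v$ where $m_v,n_v$ are the numbers of leaves above the two inputs of $v$; $h:M\to M$ sends $\beta\mapsto\mu,\mu\mapsto0$; $H$ sends a decorated tree with $n$ vertices to $\sum_v\frac{\omega(v)}{\binom{n+1}{2}}$ times the tree with $h$ applied at $v$ (Koszul sign, vertices ordered via the planar representation). *)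

(* Defs.v *)
From HB Require Import structures.
From mathcomp Require Import all_boot all_order all_algebra.
Set Implicit Arguments. Unset Strict Implicit. Unset Printing Implicit Defensive.
Import GRing.Theory.
Local Open Scope ring_scope.

(* Generators of M: mu (degree 1) and beta (degree 2), arity 2, trivial S_2-action. *)
Inductive dec := Mu | Be.

Definition dec_eqb (a b : dec) : bool :=
  match a, b with Mu, Mu | Be, Be => true | _, _ => false end.
Lemma dec_eqP : Equality.axiom dec_eqb.
Proof. by case; case; constructor. Qed.
HB.instance Definition _ := hasDecEq.Build dec dec_eqP.

Definition deg (d : dec) : nat := if d is Mu then 1%N else 2%N.

Inductive tree := Lf of nat | Nd of dec & tree & tree.

Fixpoint leaves (t : tree) : seq nat :=
  match t with Lf i => [:: i] | Nd _ l r => leaves l ++ leaves r end.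
Definition nleaves (t : tree) : nat := size (leaves t).

Fixpoint tdeg (t : tree) : nat :=
  match t with Lf _ => 0%N | Nd d l r => (deg d + tdeg l + tdeg r)%N end.
Definition tpar (t : tree) : bool := odd (tdeg t).

(* tiso t t' s : t' is another planar representative of the same non-planar
   tree, and [t'] = (-1)^s [t] in T^c(M) (Koszul sign of reordering the vertex
   decorations, vertices being ordered by the prefix order of the planar
   representative; the S_2-action on M is trivial). *)
Inductive tiso : tree -> tree -> bool -> Prop :=
| tiso_leaf i : tiso (Lf i) (Lf i) false
| tiso_node d l r l' r' s1 s2 :
    tiso l l' s1 -> tiso r r' s2 -> tiso (Nd d l r) (Nd d l' r') (s1 (+) s2)
| tiso_swap d l r l' r' s1 s2 :
    tiso l l' s1 -> tiso r r' s2 ->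
    tiso (Nd d l r) (Nd d r' l') (s1 (+) s2 (+) (tpar l && tpar r)).

Section Model.
Variable R : fieldType.

(* An element of T^c(M)(n) is given by its coefficient function c on planar
   representatives: x = sum over non-planar trees of c(t) [t]. *)
Definition tcM (n : nat) (c : tree -> R) : Prop :=
  (forall t, c t != 0 -> perm_eq (leaves t) (iota 0 n)) /\
  (forall t t' s, tiso t t' s -> c t' = (-1) ^+ s * c t).

(* One-hole contexts: a tree with one ternary vertex (the hole) whose three
   input subtrees A, B, C are given separately. *)
Inductive ctx := Hole | CL of dec & ctx & tree | CR of dec & tree & ctx.
Fixpoint plug (K : ctx) (u : tree) : tree :=
  match K with
  | Hole => u
  | CL d K' r => Nd d (plug K' u) r
  | CR d l K' => Nd d l (plug K' u)
  end.

(* The twelve expansions of the ternary vertex into two binary vertices, outer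
   decoration o, inner decoration i, and the input k (0 = A, 1 = B, 2 = C) that
   is attached directly to the outer vertex.  loc_sign is the Koszul sign
   relating the planar tree to the composite  E(k,o,i) o (A,B,C)  with E(k,o,i)
   the 2-vertex tree o(i(x_a,x_b),x_k). *)
Definition loc_tree (k : 'I_3) (o i : dec) (A B C : tree) : tree :=
  match val k with
  | 0 => Nd o (Nd i B C) A
  | 1 => Nd o (Nd i A C) B
  | _ => Nd o (Nd i A B) C
  end.
Definition loc_sign (k : 'I_3) (A B C : tree) : bool :=
  match val k with
  | 0 => tpar A && (tpar B (+) tpar C)
  | 1 => tpar B && tpar C
  | _ => false
  end.

(* T^c(M)(3) has basis E(k,o,i), k in 'I_3, o i in {Mu,Be}. *)
Definition locvec := 'I_3 -> dec -> dec -> R.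
Definition Eb (k0 : 'I_3) (o0 i0 : dec) : locvec :=
  fun k o i => ((k == k0) && (o == o0) && (i == i0))%:R.
Definition vadd (u v : locvec) : locvec := fun k o i => u k o i + v k o i.
Definition vsub (u v : locvec) : locvec := fun k o i => u k o i - v k o i.

Definition i0 : 'I_3 := @Ordinal 3 0 isT.
Definition i1 : 'I_3 := @Ordinal 3 1 isT.
Definition i2 : 'I_3 := @Ordinal 3 2 isT.

(* ker of d_2 : T^c(M)(3) -> sG(3): the S_3-module s^2 R(3) (with the
   suspension signs), spanned by the associativity relations of the product,
   the Jacobi relation of the degree-1 bracket, and the Leibniz relations. *)
Definition relvecs : seq locvec :=
  [:: vsub (Eb i0 Mu Mu) (Eb i1 Mu Mu);
      vsub (Eb i0 Mu Mu) (Eb i2 Mu Mu);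
      vsub (Eb i1 Mu Mu) (Eb i2 Mu Mu);
      vadd (vadd (Eb i0 Be Be) (Eb i1 Be Be)) (Eb i2 Be Be);
      vadd (vadd (Eb i0 Be Mu) (Eb i1 Mu Be)) (Eb i2 Mu Be);
      vadd (vadd (Eb i1 Be Mu) (Eb i0 Mu Be)) (Eb i2 Mu Be);
      vadd (vadd (Eb i2 Be Mu) (Eb i0 Mu Be)) (Eb i1 Mu Be)].

Definition in_relspan (a : locvec) : Prop :=
  exists lam : 'I_7 -> R,
    forall k o i, a k o i = \sum_(r < 7) lam r * nth (fun _ _ _ => 0) relvecs r k o i.

(* G^¡(n) = T^c(M)(n) ∩ ker d_2 : for every edge contraction (context K with
   inputs A,B,C), the local component must lie in ker of d_2 on T^c(M)(3). *)
Definition Gdual (n : nat) (c : tree -> R) : Prop :=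
  tcM n c /\
  forall K A B C,
    in_relspan (fun k o i => (-1) ^+ loc_sign k A B C * c (plug K (loc_tree k o i A B C))).

(* The homotopy H, on coefficient functions: the coefficient of t in H(x) is the
   sum over vertices v of t decorated by Mu of
   omega(v) / binom(n+1,2) * (Koszul sign) * (coefficient of t with Be at v).
   f rebuilds the whole tree, s is the parity of the degrees of the vertices
   preceding the current one in prefix order. *)
Fixpoint Hsum (c : tree -> R) (f : tree -> tree) (s : bool) (t : tree) : R :=
  match t with
  | Lf _ => 0
  | Nd d l r =>
      (if d is Mu then (-1) ^+ s * (nleaves l * nleaves r)%:R * c (f (Nd Be l r))
       else 0)
      + Hsum c (fun l' => f (Nd d l' r)) (s (+) odd (deg d)) l
      + Hsum c (fun r' => f (Nd d l r')) (s (+) odd (deg d) (+) tpar l) r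
  end.

Definition Hop (c : tree -> R) : tree -> R :=
  fun t => ('C(nleaves t, 2))%:R^-1 * Hsum c id false t.

End Model.

(* Main.v *)
Require Import Defs.
From HB Require Import structures.
From mathcomp Require Import all_boot all_order all_algebra.
From mathcomp Require Import ring zify.
Set Implicit Arguments. Unset Strict Implicit. Unset Printing Implicit Defensive.
Import GRing.Theory.
Local Open Scope ring_scope.

Section Aux.
Variable R : fieldType.
Implicit Types a b : 'I_3 -> dec -> dec -> R.

Definition PP a : Prop :=
 (a i0 Mu Mu + a i1 Mu Mu + a i2 Mu Mu = 0 /\ a i0 Be Be = a i1 Be Be) /\
     (a i1 Be Be = a i2 Be Be /\ a i0 Mu Be = a i1 Be Mu + a i2 Be Mu) /\
     (a i1 Mu Be = a i0 Be Mu + a i2 Be Mu /\ a i2 Mu Be = a i0 Be Mu + a i1 Be Mu).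

Lemma ord3P (k : 'I_3) : [\/ k = i0, k = i1 | k = i2].
Proof.
case: k => [[|[|[|m]]] Hk].
- by constructor 1; apply/val_inj.
- by constructor 2; apply/val_inj.
- by constructor 3; apply/val_inj.
- by [].
Qed.

Lemma relspanP a : in_relspan a <-> PP a.
Proof.
split.
- case=> lam H; rewrite /PP !H /relvecs.
  rewrite !big_ord_recl !big_ord0 /= /vsub /vadd /Eb /=.
  by repeat split; ring.
- case=> [[h1 h2] [[h3 h4] [h5 h6]]].
  exists (fun r : 'I_7 => nth 0 [:: - a i1 Mu Mu; - a i2 Mu Mu; 0; a i0 Be Be;
      a i0 Be Mu; a i1 Be Mu; a i2 Be Mu] r).
  move=> k o i; rewrite /relvecs !big_ord_recl !big_ord0 /= /vsub /vadd /Eb /=.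
  case: (ord3P k) => ->; case: o; case: i => /=.
  all: try ring.
  all: rewrite ?h2 ?h3 ?h4 ?h5 ?h6; try ring.
  all: rewrite -?h1 /=; try ring.
Qed.

Lemma PPext a b : (forall k o i, a k o i = b k o i) -> PP a -> PP b.
Proof. by move=> E; rewrite /PP !E. Qed.

Lemma PP0 : PP (fun _ _ _ => 0).
Proof. by rewrite /PP; repeat split; ring. Qed.

Lemma PPD a b : PP a -> PP b -> PP (fun k o i => a k o i + b k o i).
Proof.
case=> [[h1 h2] [[h3 h4] [h5 h6]]] [[g1 g2] [[g3 g4] [g5 g6]]].
rewrite /PP h2 h3 h4 h5 h6 g2 g3 g4 g5 g6; repeat split; try ring.
rewrite -[RHS](addr0 0) -{1}h1 -g1; ring.
Qed.

Lemma PPZ (l : R) a : PP a -> PP (fun k o i => l * a k o i).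
Proof.
case=> [[h1 h2] [[h3 h4] [h5 h6]]].
rewrite /PP h2 h3 h4 h5 h6; repeat split; try ring.
by rewrite -!mulrDr h1 mulr0.
Qed.

Definition sgoi (o i : dec) : bool := odd (deg o) (+) odd (deg i).

Lemma PPoi a : PP a -> PP (fun k o i => (-1) ^+ sgoi o i * a k o i).
Proof.
case=> [[h1 h2] [[h3 h4] [h5 h6]]].
rewrite /PP /sgoi /= h2 h3 h4 h5 h6; repeat split; try ring.
by rewrite !mul1r h1.
Qed.

Variable c : tree -> R.

Lemma Hsum_sign t : forall f s, Hsum c f s t = (-1) ^+ s * Hsum c f false t.
Proof.
elim: t => [i|d l IHl r IHr] f s; first by rewrite /= mulr0.
have E : forall b1 b2 : bool, Hsum c (fun l' => f (Nd d l' r)) (b1 (+) b2) l =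
   (-1) ^+ b1 * Hsum c (fun l' => f (Nd d l' r)) b2 l.
  by move=> b1 b2; rewrite IHl [in RHS]IHl signr_addb mulrA.
have E' : forall b1 b2 : bool, Hsum c (fun r' => f (Nd d l r')) (b1 (+) b2) r =
   (-1) ^+ b1 * Hsum c (fun r' => f (Nd d l r')) b2 r.
  by move=> b1 b2; rewrite IHr [in RHS]IHr signr_addb mulrA.
rewrite /= (E s (odd (deg d))) -addbA (E' s (odd (deg d) (+) tpar l)).
case: d E E' => /= _ _; ring.
Qed.

Lemma HF t : forall (F : 'I_3 -> dec -> dec -> tree -> tree)
  (e : 'I_3 -> dec -> dec -> R) s,
 (forall t', tdeg t' = (tdeg t).+1 -> PP (fun k o i => e k o i * c (F k o i t'))) ->
 PP (fun k o i => e k o i * Hsum c (F k o i) s t).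
Proof.
elim: t => [j|d l IHl r IHr] F e s H /=.
  by apply: PPext PP0 => k o i; rewrite mulr0.
apply: PPext (PPD (PPD _ (IHl (fun k o i l' => F k o i (Nd d l' r)) e _ _))
                        (IHr (fun k o i r' => F k o i (Nd d l r')) e _ _)).
- by move=> k o i /=; rewrite !mulrDr.
- case: d H => H.
  + apply: PPext (PPZ ((-1) ^+ s * (nleaves l * nleaves r)%:R) (H _ _)) => [k o i|].
      by ring.
    by rewrite /=; lia.
  + by apply: PPext PP0 => k o i; rewrite mulr0.
- by move=> t' Ht'; apply: H => /=; rewrite Ht'; lia.
- by move=> t' Ht'; apply: H => /=; rewrite Ht'; lia.
Qed.

Definition wout (k : 'I_3) (nA nB nC : nat) : nat :=
  match val k with 0 => ((nB + nC) * nA)%N | 1 => ((nA + nC) * nB)%N | _ => ((nA + nB) * nC)%N end.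
Definition win (k : 'I_3) (nA nB nC : nat) : nat :=
  match val k with 0 => (nB * nC)%N | 1 => (nA * nC)%N | _ => (nA * nB)%N end.

Lemma PPloc a nA nB nC (s : bool) : PP a ->
  PP (fun k o i => (-1) ^+ s *
     ((if o is Mu then (wout k nA nB nC)%:R * a k Be i else 0) +
      (if i is Mu then (-1) ^+ odd (deg o) * (win k nA nB nC)%:R * a k o Be else 0))).
Proof.
case=> [[h1 h2] [[h3 h4] [h5 h6]]].
rewrite /PP /wout /win /= !natrM !natrD h4 h5 h6 -h3 -h2; repeat split; ring.
Qed.

Definition sigA (k : 'I_3) (A B C : tree) : bool :=
  match val k with 0 => tpar B (+) tpar C | _ => false end.
Definition sigB (k : 'I_3) (A B C : tree) : bool :=
  match val k with 0 => false | 1 => tpar A (+) tpar C | _ => tpar A end.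
Definition sigC (k : 'I_3) (A B C : tree) : bool :=
  match val k with 0 => tpar B | 1 => tpar A | _ => tpar A (+) tpar B end.

Ltac normH := repeat match goal with |- context [Hsum ?c ?f ?s ?t] =>
  lazymatch s with false => fail | _ => rewrite (Hsum_sign t f s) end end.

Lemma DEC f s A B C k o i :
  (-1) ^+ loc_sign k A B C * Hsum c f s (loc_tree k o i A B C) =
  (-1) ^+ s * ((if o is Mu then (wout k (nleaves A) (nleaves B) (nleaves C))%:R *
                   ((-1) ^+ loc_sign k A B C * c (f (loc_tree k Be i A B C))) else 0) +
               (if i is Mu then (-1) ^+ odd (deg o) * (win k (nleaves A) (nleaves B) (nleaves C))%:R *
                   ((-1) ^+ loc_sign k A B C * c (f (loc_tree k o Be A B C))) else 0))
  + (-1) ^+ (loc_sign k A B C (+) s (+) sgoi o i (+) sigA k A B C) *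
      Hsum c (fun x => f (loc_tree k o i x B C)) false A
  + (-1) ^+ (loc_sign k A B C (+) s (+) sgoi o i (+) sigB k A B C) *
      Hsum c (fun y => f (loc_tree k o i A y C)) false B
  + (-1) ^+ (loc_sign k A B C (+) s (+) sgoi o i (+) sigC k A B C) *
      Hsum c (fun c' => f (loc_tree k o i A B c')) false C.
Proof.
case: (ord3P k) => ->; case: o; case: i; rewrite /= ; normH;
rewrite /nleaves /wout /win /loc_sign /sgoi /sigA /sigB /sigC /tpar /= ?size_cat ?oddD;
case: (odd (tdeg A)); case: (odd (tdeg B)); case: (odd (tdeg C)); case: s; rewrite /=; ring.
Qed.

Lemma sgmove (l s g sg l' X : bool) (x : R) : l (+) sg = l' (+) X ->
  (-1) ^+ (l (+) s (+) g (+) sg) * x = (-1) ^+ (s (+) X) * ((-1) ^+ g * ((-1) ^+ l' * x)).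
Proof.
move=> H.
have -> : l (+) s (+) g (+) sg = (l (+) sg) (+) s (+) g.
  by move: l s g sg {H}; do 4 case.

by rewrite H !signr_addb; ring.
Qed.

Lemma tpar_Be_flip t t' : tdeg t' = (tdeg t).+1 -> tpar t' = ~~ tpar t.
Proof. by rewrite /tpar => ->; rewrite oddS. Qed.

Lemma sA A A' B C k : tpar A' = ~~ tpar A ->
  loc_sign k A B C (+) sigA k A B C = loc_sign k A' B C (+) false.
Proof.
move=> H; case: (ord3P k) => ->; rewrite /loc_sign /sigA /= ?H;
by case: (tpar A); case: (tpar B); case: (tpar C).
Qed.
Lemma sB A B B' C k : tpar B' = ~~ tpar B ->
  loc_sign k A B C (+) sigB k A B C = loc_sign k A B' C (+) tpar A.
Proof.
move=> H; case: (ord3P k) => ->; rewrite /loc_sign /sigB /= ?H;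
by case: (tpar A); case: (tpar B); case: (tpar C).
Qed.
Lemma sC A B C C' k : tpar C' = ~~ tpar C ->
  loc_sign k A B C (+) sigC k A B C = loc_sign k A B C' (+) (tpar A (+) tpar B).
Proof.
move=> H; case: (ord3P k) => ->; rewrite /loc_sign /sigC /= ?H;
by case: (tpar A); case: (tpar B); case: (tpar C).
Qed.

Definition QQ (g : tree -> R) := forall K A B C,
  PP (fun k o i => (-1) ^+ loc_sign k A B C * g (plug K (loc_tree k o i A B C))).

Lemma LH f s A B C : QQ (fun x => c (f x)) ->
  PP (fun k o i => (-1) ^+ loc_sign k A B C * Hsum c f s (loc_tree k o i A B C)).
Proof.
move=> Q.
apply: PPext; first by move=> k o i; rewrite DEC.
apply: PPD; first apply: PPD; first apply: PPD.
- exact: (PPloc _ _ _ s (Q Hole A B C)).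
- apply: HF => t' Ht'.
  apply: (PPext _ (PPZ ((-1) ^+ (s (+) false)) (PPoi (Q Hole t' B C)))) => k o i.
  by rewrite (sgmove _ _ _ (sA B C k (tpar_Be_flip Ht'))).
- apply: HF => t' Ht'.
  apply: (PPext _ (PPZ ((-1) ^+ (s (+) tpar A)) (PPoi (Q Hole A t' C)))) => k o i.
  by rewrite (sgmove _ _ _ (sB A C k (tpar_Be_flip Ht'))).
- apply: HF => t' Ht'.
  apply: (PPext _ (PPZ ((-1) ^+ (s (+) (tpar A (+) tpar B))) (PPoi (Q Hole A B t')))) => k o i.
  by rewrite (sgmove _ _ _ (sC A B k (tpar_Be_flip Ht'))).
Qed.

Fixpoint ctdeg (K : ctx) : nat :=
  match K with Hole => 0%N | CL d K' r => (deg d + ctdeg K' + tdeg r)%N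
  | CR d l K' => (deg d + tdeg l + ctdeg K')%N end.

Lemma tdeg_plug K u : tdeg (plug K u) = (ctdeg K + tdeg u)%N.
Proof. elim: K => [|d K IH r|d l K IH] //=; rewrite IH; lia. Qed.

Lemma tpar_plug_loc K k o i A B C :
  tpar (plug K (loc_tree k o i A B C)) =
  (odd (ctdeg K) (+) tpar A (+) tpar B (+) tpar C) (+) sgoi o i.
Proof.
rewrite /tpar tdeg_plug /sgoi.
case: (ord3P k) => ->; rewrite /= !oddD;
by case: (odd (ctdeg K)); case: (odd (deg o)); case: (odd (deg i));
   case: (odd (tdeg A)); case: (odd (tdeg B)); case: (odd (tdeg C)).
Qed.

Lemma nleaves_plug K u u' : nleaves u = nleaves u' -> nleaves (plug K u) = nleaves (plug K u').
Proof.
move=> E; elim: K => [|d K IH r|d l K IH] //=; rewrite /nleaves /= !size_cat;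
by rewrite -!/(nleaves _) IH.
Qed.

Lemma nleaves_loc k o i A B C :
  nleaves (loc_tree k o i A B C) = (nleaves A + nleaves B + nleaves C)%N.
Proof. by case: (ord3P k) => ->; rewrite /nleaves /= !size_cat; lia. Qed.

Lemma nleaves_pl K k o i A B C :
  nleaves (plug K (loc_tree k o i A B C)) = nleaves (plug K (loc_tree i0 Mu Mu A B C)).
Proof. by apply: nleaves_plug; rewrite !nleaves_loc. Qed.

Lemma L1 K : forall f s A B C, QQ (fun x => c (f x)) ->
  PP (fun k o i => (-1) ^+ loc_sign k A B C * Hsum c f s (plug K (loc_tree k o i A B C))).
Proof.
elim: K => [|d K IH r|d l K IH] f s A B C Q.
- exact: LH.
- set N := nleaves (plug K (loc_tree i0 Mu Mu A B C)).
  set X := odd (ctdeg K) (+) tpar A (+) tpar B (+) tpar C.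
  apply: (@PPext (fun k o i =>
     (if d is Mu then (-1) ^+ s * (N * nleaves r)%:R *
        ((-1) ^+ loc_sign k A B C * c (f (Nd Be (plug K (loc_tree k o i A B C)) r))) else 0)
     + (-1) ^+ loc_sign k A B C * Hsum c (fun l' => f (Nd d l' r)) (s (+) odd (deg d))
           (plug K (loc_tree k o i A B C))
     + (-1) ^+ loc_sign k A B C * ((-1) ^+ (s (+) odd (deg d) (+) X) * ((-1) ^+ sgoi o i *
         Hsum c (fun r' => f (Nd d (plug K (loc_tree k o i A B C)) r')) false r)))).
  + move=> k o i /=; rewrite tpar_plug_loc -/X (nleaves_pl K k o i) -/N.
    rewrite (Hsum_sign r _ (_ (+) _ (+) _)) !signr_addb.
    case: d {Q IH}; ring.
  + apply: PPD; first apply: PPD.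
    * case: d {IH} Q => Q; last by apply: PPext PP0 => k o i.
      apply: (PPext _ (PPZ ((-1) ^+ s * (N * nleaves r)%:R) (Q (CL Be K r) A B C))) => k o i.
      by rewrite mulrA.
    * apply: IH => K' A' B' C'; exact: (Q (CL d K' r) A' B' C').
    * apply: (PPext _ (PPZ ((-1) ^+ (s (+) odd (deg d) (+) X)) (@HF r (fun k o i r' => f (Nd d (plug K (loc_tree k o i A B C)) r')) (fun k o i =>
          (-1) ^+ sgoi o i * (-1) ^+ loc_sign k A B C) false _))) => [k o i|].
        by ring.
      move=> t' _.
      apply: (PPext _ (PPoi (Q (CL d K t') A B C))) => k o i /=.
      by ring.
- set N := nleaves (plug K (loc_tree i0 Mu Mu A B C)).
  apply: (@PPext (fun k o i =>
     (if d is Mu then (-1) ^+ s * (nleaves l * N)%:R *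
        ((-1) ^+ loc_sign k A B C * c (f (Nd Be l (plug K (loc_tree k o i A B C))))) else 0)
     + (-1) ^+ (s (+) odd (deg d)) * ((-1) ^+ loc_sign k A B C *
         Hsum c (fun l' => f (Nd d l' (plug K (loc_tree k o i A B C)))) false l)
     + (-1) ^+ loc_sign k A B C * Hsum c (fun r' => f (Nd d l r')) (s (+) odd (deg d) (+) tpar l)
           (plug K (loc_tree k o i A B C)))).
  + move=> k o i /=; rewrite (nleaves_pl K k o i) -/N.
    rewrite (Hsum_sign l _ (_ (+) _)).
    case: d {Q IH}; ring.
  + apply: PPD; first apply: PPD.
    * case: d {IH} Q => Q; last by apply: PPext PP0 => k o i.
      apply: (PPext _ (PPZ ((-1) ^+ s * (nleaves l * N)%:R) (Q (CR Be l K) A B C))) => k o i.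
      by rewrite mulrA.
    * apply: PPZ; apply: (PPext _ (@HF l (fun k o i l' => f (Nd d l' (plug K (loc_tree k o i A B C)))) (fun k o i => (-1) ^+ loc_sign k A B C) false _)) => [//|].
      move=> t' _; exact: (Q (CR d t' K) A B C).
    * apply: IH => K' A' B' C'; exact: (Q (CR d l K') A' B' C').
Qed.

Lemma tiso_tdeg t t' s : tiso t t' s -> tdeg t' = tdeg t.
Proof. by elim=> //= *; lia. Qed.

Lemma tiso_nl t t' s : tiso t t' s -> nleaves t' = nleaves t.
Proof.
elim=> //= d l r l' r' s1 s2 _ E1 _ E2; rewrite /nleaves /= !size_cat -!/(nleaves _) E1 E2 //.
by rewrite addnC.
Qed.

Lemma sgeq (a b : bool) : a = b -> (-1) ^+ a = (-1) ^+ b :> R.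
Proof. by move=> ->. Qed.

Lemma Hsum_iso t t' s : tiso t t' s -> forall f f' sg sg' ka,
  (forall u u' s0, tiso u u' s0 -> tdeg u = (tdeg t).+1 ->
     c (f' u') = (-1) ^+ (s0 (+) ka) * c (f u)) ->
  Hsum c f' sg' t' = (-1) ^+ (s (+) ka (+) sg (+) sg') * Hsum c f sg t.
Proof.
elim=> [j|d l r l' r' s1 s2 Hl IHl Hr IHr|d l r l' r' s1 s2 Hl IHl Hr IHr]
  f f' sg sg' ka H.
- by rewrite /= mulr0.
- have E1 := IHl (fun x => f (Nd d x r)) (fun x => f' (Nd d x r'))
     (sg (+) odd (deg d)) (sg' (+) odd (deg d)) (s2 (+) ka).
  have E2 := IHr (fun x => f (Nd d l x)) (fun x => f' (Nd d l' x))
     (sg (+) odd (deg d) (+) tpar l) (sg' (+) odd (deg d) (+) tpar l') (s1 (+) ka).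
  rewrite /= E1 ?E2.
  + rewrite (tiso_nl Hl) (tiso_nl Hr) /tpar (tiso_tdeg Hl) -/(tpar l).
    case: d H E1 E2 => H _ _.
    * rewrite (H _ _ _ (tiso_node Be Hl Hr)) /=; last lia.
      rewrite !signr_addb; case: sg; case: sg'; case: (tpar l); rewrite /=; ring.
    * rewrite !signr_addb; case: sg; case: sg'; case: (tpar l); rewrite /=; ring.
  + move=> u u' s0 Hu Hdu.
    rewrite (H _ _ _ (tiso_node d Hl Hu)) /=; last by rewrite Hdu; lia.
    by congr (_ * _); apply: sgeq; destruct s0, s1, ka.
  + move=> u u' s0 Hu Hdu.
    rewrite (H _ _ _ (tiso_node d Hu Hr)) /=; last by rewrite Hdu; lia.
    by congr (_ * _); apply: sgeq; destruct s0, s2, ka.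
- have E1 := IHl (fun x => f (Nd d x r)) (fun x => f' (Nd d r' x))
     (sg (+) odd (deg d)) (sg' (+) odd (deg d) (+) tpar r') (s2 (+) (~~ tpar l && tpar r) (+) ka).
  have E2 := IHr (fun x => f (Nd d l x)) (fun x => f' (Nd d x l'))
     (sg (+) odd (deg d) (+) tpar l) (sg' (+) odd (deg d)) (s1 (+) (tpar l && ~~ tpar r) (+) ka).
  rewrite /= E1 ?E2.
  + rewrite (tiso_nl Hl) (tiso_nl Hr) /tpar (tiso_tdeg Hr) -/(tpar r) -/(tpar l) (mulnC (nleaves r)).
    case: d H E1 E2 => H _ _.
    * rewrite (H _ _ _ (tiso_swap Be Hl Hr)) /=; last lia.
      rewrite !signr_addb; case: sg; case: sg'; case: (tpar l); case: (tpar r); rewrite /=; ring.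
    * rewrite !signr_addb; case: sg; case: sg'; case: (tpar l); case: (tpar r); rewrite /=; ring.
  + move=> u u' s0 Hu Hdu.
    rewrite (H _ _ _ (tiso_swap d Hl Hu)) /=; last by rewrite Hdu; lia.
    rewrite (tpar_Be_flip Hdu).
    by congr (_ * _); apply: sgeq; destruct s0, s1, ka, (tpar l), (tpar r).
  + move=> u u' s0 Hu Hdu.
    rewrite (H _ _ _ (tiso_swap d Hu Hr)) /=; last by rewrite Hdu; lia.
    rewrite (tpar_Be_flip Hdu).
    by congr (_ * _); apply: sgeq; destruct s0, s2, ka, (tpar l), (tpar r).
Qed.

Lemma Hsum_supp t : forall f s, Hsum c f s t != 0 ->
  exists t', c (f t') != 0 /\ leaves t' = leaves t.
Proof.
elim: t => [j|d l IHl r IHr] f s /=; first by rewrite eqxx.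
move=> H.
case: (eqVneq (Hsum c (fun x => f (Nd d x r)) (s (+) odd (deg d)) l) 0) => [E1|/IHl [t' [H1 H2]]];
  last by exists (Nd d t' r); rewrite /= H2.
case: (eqVneq (Hsum c (fun x => f (Nd d l x)) (s (+) odd (deg d) (+) tpar l) r) 0) => [E2|/IHr [t' [H1 H2]]];
  last by exists (Nd d l t'); rewrite /= H2.
move: H; rewrite E1 E2 !addr0; case: d {E1 E2} => H; last by rewrite eqxx in H.
exists (Nd Be l r); split=> //.
by move: H; rewrite !mulf_eq0 !negb_or => /andP [_].
Qed.
End Aux.

Theorem lemma2p5 (R : fieldType) (charR : [pchar R]%R =i pred0) (n : nat)
  (c : tree -> R) :
  Gdual n c -> Gdual n (Hop c).
Proof.
move=> [[supp iso] loc]; split; first split.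
- move=> t; rewrite /Hop mulf_eq0 negb_or => /andP [_ /Hsum_supp [t' [H1 H2]]].
  by rewrite -H2; exact: supp.
- move=> t t' s Ht; rewrite /Hop (tiso_nl Ht).
  rewrite (@Hsum_iso _ c _ _ _ Ht id id false false false); first by rewrite !addbF mulrCA.
  by move=> u u' s0 Hu _; rewrite addbF; exact: iso Hu.
- move=> K A B C; apply/relspanP.
  have Q : QQ (fun x => c (id x)) by move=> K' A' B' C'; apply/relspanP; exact: loc.
  apply: (PPext _ (PPZ ((('C(nleaves (plug K (loc_tree i0 Mu Mu A B C)), 2))%:R)^-1)
              (@L1 R c K id false A B C Q))) => k o i.
  by rewrite /Hop (nleaves_pl K k o i) mulrCA.
Qed.
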